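(* Let $G$ be a multi-hypergraph all of whose edges have size 1 (loops) or size 2, such that each vertex has at most one loop (while 2-edges may have arbitrary multiplicity). Then $\operatorname{ex}(G,\mathcal{D})\geq\frac{2}{3}e(G)$.
   Context: The dumbbell $\mathcal{D}$ is the hypergraph on two vertices $u,v$ with edges $\{u,v\},\{u\},\{v\}$. A copy of $\mathcal{D}$ in $G$ is a sub-multihypergraph isomorphic to $\mathcal{D}$ (preserving edge sizes). $e(G)$ counts all edges (loops and 2-edges) with multiplicity, and $\operatorname{ex}(G,\mathcal{D})$ is the maximum number of edges (with multiplicity) of a sub-multihypergraph of $G$ containing no copy of $\mathcal{D}$. *)

(* Defs.v *)
From mathcomp Require Import all_boot.
Set Implicit Arguments. Unset Strict Implicit. Unset Printing Implicit Defensive.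

(* A multi-hypergraph on vertex set V: a finite type E of edge labels
   (so edges may repeat), each edge e having vertex set [ends e]. *)

Definition loops_and_2edges (V E : finType) (ends : E -> {set V}) : Prop :=
  forall e : E, (#|ends e| == 1) || (#|ends e| == 2).

Definition at_most_one_loop (V E : finType) (ends : E -> {set V}) : Prop :=
  forall e f : E, #|ends e| = 1 -> ends e = ends f -> e = f.

Definition dumbbell_free (V E : finType) (ends : E -> {set V}) (S : {set E}) : bool :=
  ~~ [exists u : V, exists v : V, (u != v) &&
       [exists e1 in S, exists e2 in S, exists e3 in S,
          [&& ends e1 == [set u; v], ends e2 == [set u] & ends e3 == [set v]]]].

Definition ex_dumbbell (V E : finType) (ends : E -> {set V}) : nat :=
  \max_(S : {set E} | dumbbell_free ends S) #|S|.

(* Main.v *)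
Require Import Defs.
From mathcomp Require Import all_boot.
From mathcomp Require Import zify.

Lemma ar0 f : 2 * f <= 3 * f. Proof. lia. Qed.
Lemma ar3 {a b f n} : a + b = f -> 0 < b -> f <= n.+1 -> a <= n. Proof. lia. Qed.
Lemma ar2 {f' s' f e} : 2 * f' <= 3 * s' -> f' + e = f -> 3 <= e -> 2 * f <= 3 * (s' + e.-1).
Proof. lia. Qed.
Lemma ar4 {f' s' f b} : 2 * f' <= 3 * s' -> f' + b = f -> b <= 3 -> 2 * f <= 3 * (s' + 2).
Proof. lia. Qed.
Lemma ar5 {x y} : x + y = 2 + 1 -> x <= 3. Proof. lia. Qed.

Section Aux.
Variables (V E : finType) (ends : E -> {set V}).

Definition freeS (S : {set E}) := forall x y f1 f2 f3, x != y ->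
  f1 \in S -> f2 \in S -> f3 \in S ->
  ends f1 = [set x; y] -> ends f2 = [set x] -> ends f3 = [set y] -> False.

Lemma freeP S : dumbbell_free ends S <-> freeS S.
Proof.
split.
  move=> Hf x y f1 f2 f3 xy i1 i2 i3 q1 q2 q3; move/negP: Hf; apply.
  apply/existsP; exists x; apply/existsP; exists y; rewrite xy /=.
  apply/existsP; exists f1; rewrite i1 /=.
  apply/existsP; exists f2; rewrite i2 /=.
  apply/existsP; exists f3; rewrite i3 /=.
  by rewrite q1 q2 q3 !eqxx.
move=> Hf; apply/negP => /existsP [x /existsP [y /andP [xy /existsP [f1 /andP [i1
  /existsP [f2 /andP [i2 /existsP [f3 /andP [i3 /and3P [/eqP q1 /eqP q2 /eqP q3]]]]]]]]]].
exact: (Hf x y f1 f2 f3).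
Qed.

Lemma cardD_sub (A B : {set E}) : B \subset A -> #|A :\: B| + #|B| = #|A|.
Proof. by move=> sub; rewrite -(cardsID B A) (setIidPr sub) addnC. Qed.

Lemma cardU_disj (A B : {set E}) : [disjoint A & B] -> #|A :|: B| = #|A| + #|B|.
Proof. by move=> d; rewrite cardsU (disjoint_setI0 d) cards0 subn0. Qed.

Lemma disj_sub (S F B B' : {set E}) : S \subset F :\: B' -> B \subset B' ->
  [disjoint S & B].
Proof.
move=> sS sB; rewrite -setI_eq0; apply/eqP/setP => e; rewrite !inE.
apply/negP => /andP [eS eB]; have := subsetP sS e eS.
by rewrite inE (subsetP sB e eB).
Qed.

Arguments cardD_sub {A B}.
Arguments cardU_disj {A B}.
Arguments disj_sub {S F B B'}.

Hypothesis H1 : at_most_one_loop ends.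

Lemma loop_uniq f g x : ends f = [set x] -> ends g = [set x] -> f = g.
Proof. by move=> hf hg; apply: H1; rewrite ?hf ?hg ?cards1. Qed.
Arguments loop_uniq {f g x}.

Lemma main n : forall F : {set E}, #|F| <= n ->
  exists2 S : {set E}, S \subset F & freeS S /\ 2 * #|F| <= 3 * #|S|.
Proof.
elim: n => [|n IH] F cF.
  exists F => //; split; last exact: ar0.
  move=> x y f1 f2 f3 _ i1.
  by move: cF; rewrite leqn0 => /eqP/cards0_eq Fe; rewrite Fe inE in i1.
case: (boolP (dumbbell_free ends F)) => [/freeP fF|nF].
  by exists F => //; split => //; exact: ar0.
have [u [v [e1 [e2 [e3 [uv i1 i2 i3 [q1 q2 q3]]]]]]] :
  exists u v e1 e2 e3, [/\ u != v, e1 \in F, e2 \in F, e3 \in F &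
     [/\ ends e1 = [set u; v], ends e2 = [set u] & ends e3 = [set v]]].
  move: nF; rewrite /dumbbell_free negbK => /existsP [x /existsP [y /andP [xy /existsP [f1 /andP [j1
    /existsP [f2 /andP [j2 /existsP [f3 /andP [j3 /and3P [/eqP r1 /eqP r2 /eqP r3]]]]]]]]]].
  by exists x, y, f1, f2, f3.
have c1 : #|ends e1| = 2 by rewrite q1 cards2 uv.
have c2 : #|ends e2| = 1 by rewrite q2 cards1.
have c3 : #|ends e3| = 1 by rewrite q3 cards1.
have ue1 : u \in ends e1 by rewrite q1 !inE eqxx.
have ve1 : v \in ends e1 by rewrite q1 !inE eqxx orbT.
have ue2 : u \in ends e2 by rewrite q2 !inE eqxx.
have gen : forall (S' B : {set E}), freeS S' -> (forall f, f \in B -> u \in ends f) ->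
   forall x y f1 f2 f3, x != y -> f1 \in S' :|: B -> f2 \in S' :|: B -> f3 \in S' :|: B ->
   ends f1 = [set x; y] -> ends f2 = [set x] -> ends f3 = [set y] -> u \in ends f1.
  move=> S' B fS hB x y f1 f2 f3 xy j1 j2 j3 r1 r2 r3.
  apply/negP => nu.
  have inS : forall f, f \in S' :|: B -> ~~ (u \in ends f) -> f \in S'.
    move=> f; rewrite inE => /orP [//|/hB fu]; by rewrite fu.
  have nx : u != x by apply/negP => /eqP ux; apply: nu; rewrite r1 ux !inE eqxx.
  have ny : u != y by apply/negP => /eqP ux; apply: nu; rewrite r1 ux !inE eqxx orbT.
  apply: (fS x y f1 f2 f3 xy (inS _ j1 _) (inS _ j2 _) (inS _ j3 _)) => //.
    by apply/negP.
    by rewrite r2 inE.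
  by rewrite r3 inE.
set Ev := [set e in F | (u \in ends e) && (#|ends e| == 2)].
have e1Ev : e1 \in Ev by rewrite inE i1 ue1 c1 eqxx.
have e2Ev : e2 \notin Ev by rewrite inE c2 /= !andbF.
case: (leqP 2 #|Ev|) => hEv.
- (* case 1: drop loop at u and keep all 2-edges at u *)
  set B := e2 |: Ev.
  have sB : B \subset F.
    apply/subsetP => e; rewrite !inE => /orP [/eqP->//|/andP[]//].
  have cB := cardD_sub sB.
  have cB' : #|B| = #|Ev|.+1 by rewrite cardsU1 e2Ev.
  have [S' sS' [fS' cS']] := IH (F :\: B) (ar3 cB ltac:(by rewrite cB' ?cB1) cF).
  have dj : [disjoint S' & Ev] by apply: (disj_sub sS'); apply/subsetP=> e; rewrite !inE orbC => ->.
  exists (S' :|: Ev).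
    apply/subsetP => e; rewrite inE => /orP [/(subsetP sS')|]; first by rewrite inE => /andP[].
    by rewrite inE => /andP[].
  split; last by rewrite cardU_disj //; have h := ar2 cS' cB; rewrite cB' /= in h; exact: h.
  move=> x y f1 f2 f3 xy j1 j2 j3 r1 r2 r3.
  have uf1 := gen S' Ev fS' ltac:(by move=> f; rewrite inE => /andP[_ /andP[]]) x y f1 f2 f3 xy j1 j2 j3 r1 r2 r3.
  have lp : forall f w, f \in S' :|: Ev -> ends f = [set w] -> f \in S'.
    move=> f w; rewrite inE => /orP [//|]; rewrite inE => /andP [_ /andP [_]] hc hf.
    by rewrite hf cards1 in hc.
  have e2S : e2 \notin S'.
    apply/negP => /(subsetP sS'); by rewrite !inE eqxx.
  move: uf1; rewrite r1 !inE => /orP [/eqP ux|/eqP uy].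
    rewrite -ux in r2; move: (lp _ _ j2 r2) => f2S.
    by have ee := loop_uniq q2 r2; rewrite ee f2S in e2S.
  rewrite -uy in r3; move: (lp _ _ j3 r3) => f3S.
  by have ee := loop_uniq q2 r3; rewrite ee f3S in e2S.
-
  have onlye1 : forall f, f \in F -> u \in ends f -> #|ends f| = 2 -> f = e1.
    move=> f fF uf cf; have fEv : f \in Ev by rewrite inE fF uf cf eqxx.
    by move/card_le1_eqP: (hEv : #|Ev| <= 1) => /(_ f e1 fEv e1Ev).
  set B := [set e2; e1; e3].
  have sB : B \subset F.
    by apply/subsetP => e; rewrite !inE => /orP [/orP [] | ] /eqP ->.
  have cB := cardD_sub sB.
  have cB3 : #|B| <= 3.
    have e21' : e2 != e1 by apply/eqP => ee; rewrite ee c1 in c2.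
    have := cardsUI [set e2; e1] [set e3]; rewrite cards2 cards1 e21' /B; exact: ar5.
  have cB1 : 0 < #|B| by apply/card_gt0P; exists e2; rewrite !inE eqxx.
  have [S' sS' [fS' cS']] := IH (F :\: B) (ar3 cB cB1 cF).
  have e21 : e2 != e1 by apply/eqP => ee; rewrite ee c1 in c2.
  have dj : [disjoint S' & [set e2; e1]].
    by apply: (disj_sub sS'); apply/subsetP=> e; rewrite !inE => /orP[]->; rewrite ?orbT.
  exists (S' :|: [set e2; e1]).
    apply/subsetP => e; rewrite inE => /orP [/(subsetP sS')|]; first by rewrite inE => /andP[].
    by rewrite !inE => /orP [] /eqP ->.
  split; last by rewrite cardU_disj // cards2 e21; exact: (ar4 cS' cB cB3).
  move=> x y f1 f2 f3 xy j1 j2 j3 r1 r2 r3.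
  have uf1 := gen S' [set e2; e1] fS' ltac:(by move=> f; rewrite !inE => /orP [] /eqP ->) x y f1 f2 f3 xy j1 j2 j3 r1 r2 r3.
  have sS : S' :|: [set e2; e1] \subset F.
    apply/subsetP => e; rewrite inE => /orP [/(subsetP sS')|]; first by rewrite inE => /andP[].
    by rewrite !inE => /orP [] /eqP ->.
  have fe1 : f1 = e1.
    by apply: onlye1 => //; [exact: (subsetP sS) | rewrite r1 cards2 xy].
  have e3S : e3 \notin S' :|: [set e2; e1].
    rewrite !inE; apply/negP => /orP [/(subsetP sS')|/orP [] /eqP ee].
      by rewrite !inE eqxx !orbT.
      by move: q3; rewrite ee q2 => /set1_inj ee'; rewrite ee' eqxx in uv.
    by rewrite ee c1 in c3.
  have : v \in ends f1 by rewrite fe1.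
  rewrite r1 !inE => /orP [/eqP vx|/eqP vy].
    rewrite -vx in r2; have ee := loop_uniq q3 r2.
    by rewrite ee j2 in e3S.
  rewrite -vy in r3; have ee := loop_uniq q3 r3.
  by rewrite ee j3 in e3S.
Qed.

End Aux.

(* e(G) = #|E|;  ex(G,D) >= (2/3) e(G)  <->  2 e(G) <= 3 ex(G,D) *)
Theorem theorem4p4 (V E : finType) (ends : E -> {set V}) :
  loops_and_2edges ends -> at_most_one_loop ends ->
  2 * #|E| <= 3 * ex_dumbbell ends.
Proof.
move=> _ H1.
have [S _ [fS cS]] := @main V E ends H1 _ _ (leqnn #|[set: E]|).
rewrite cardsT in cS; apply: (leq_trans cS); rewrite leq_mul2l /=.
rewrite /ex_dumbbell; apply: (@leq_bigmax_cond _ (fun S => dumbbell_free ends S) (fun S => #|S|)).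
by apply/freeP.
Qed.
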